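(* Let $N\ge1$, $f:\mathbb{N}^N\to\mathbb{N}$, $p$ a prime, $n$ a nonnegative integer, and let $\boldsymbol{\ell}\in\mathbb{N}^N$ be such that $\boldsymbol{\ell}\neq p\mathbf{m}$ for every $\mathbf{m}\in\mathbb{N}^N$. Define $g:\mathbb{N}^N\to\mathbb{N}$ by $g(\mathbf{x})=\binom{p}{p\mathbf{x}}_f$. Then $$\binom{np}{\boldsymbol{\ell}}_f\equiv n\cdot\sum_{\mathbf{k}}\binom{p}{\mathbf{k}}_f\binom{n-1}{\mathbf{x}_{\mathbf{k}}}_g\pmod{p^2},$$ where the sum runs over all $\mathbf{k}\in S(\boldsymbol{\ell})$ such that not every entry of $\mathbf{k}$ is divisible by $p$ and $\boldsymbol{\ell}-\mathbf{k}=p\mathbf{x}_{\mathbf{k}}$ for some $\mathbf{x}_{\mathbf{k}}\in\mathbb{N}^N$.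
   Context: $\mathbb{N}=\{0,1,2,\dots\}$. $S(\boldsymbol{\ell})=\{\mathbf{s}\in\mathbb{N}^N:\mathbf{s}\neq\mathbf{0},\ 0\le s_j\le\ell_j\ \forall j\}$. For $h:\mathbb{N}^N\to\mathbb{N}$, $k\ge0$ and $\mathbf{x}\in\mathbb{N}^N$, $\binom{k}{\mathbf{x}}_h=\sum_{\mathbf{m}_1+\cdots+\mathbf{m}_k=\mathbf{x}} h(\mathbf{m}_1)\cdots h(\mathbf{m}_k)$ over tuples of vectors in $\mathbb{N}^N$. *)

(* Defs.v *)
From mathcomp Require Import all_boot.
Set Implicit Arguments. Unset Strict Implicit. Unset Printing Implicit Defensive.

Definition vecN (N : nat) := 'I_N -> nat.

(* Generalized multinomial coefficient
   binom k x _h = sum over (m_1,...,m_k) in (N^N)^k with m_1+...+m_k = x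
   of h(m_1)...h(m_k).  Every such m_i satisfies m_i <= x <= max_j x_j
   componentwise, so the sum ranges over tuples of vectors with entries
   in 'I_(M.+1), M = max_j x_j; this is the full (finite) sum. *)
Definition gbinom (N : nat) (h : vecN N -> nat) (k : nat) (x : vecN N) : nat :=
  let M := \max_(j < N) x j in
  \sum_(t : {ffun 'I_k -> {ffun 'I_N -> 'I_M.+1}}
          | [forall j : 'I_N, \sum_(i < k) (t i j : nat) == x j])
     \prod_(i < k) h (fun j => (t i j : nat)).

(* Main.v *)
Require Import Defs.
From mathcomp Require Import all_boot zify.
From Stdlib Require Import FunctionalExtensionality.

Module Aux.
Set Implicit Arguments. Unset Strict Implicit. Unset Printing Implicit Defensive.

Section GB.
Variable N : nat.

Definition gb (B : nat) (h : vecN N -> nat) (k : nat) (x : vecN N) : nat :=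
  \sum_(t : {ffun 'I_k -> {ffun 'I_N -> 'I_B.+1}}
          | [forall j : 'I_N, \sum_(i < k) (t i j : nat) == x j])
     \prod_(i < k) h (fun j => (t i j : nat)).

Lemma gbinom_gb h k x : gbinom h k x = gb (\max_(j < N) x j) h k x.
Proof. by []. Qed.

Lemma le_sum_term k (F : 'I_k -> nat) i : F i <= \sum_(i0 < k) F i0.
Proof. by rewrite (bigD1 i) //= leq_addr. Qed.

Lemma gb_bound M B h k x : M <= B -> (forall j, x j <= M) -> gb M h k x = gb B h k x.
Proof.
move=> MB xM; rewrite /gb.
have MB' : M.+1 <= B.+1 by [].
pose wd (t : {ffun 'I_k -> {ffun 'I_N -> 'I_M.+1}}) : {ffun 'I_k -> {ffun 'I_N -> 'I_B.+1}} :=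
  [ffun i => [ffun j => widen_ord MB' (t i j)]].
pose nr (t : {ffun 'I_k -> {ffun 'I_N -> 'I_B.+1}}) : {ffun 'I_k -> {ffun 'I_N -> 'I_M.+1}} :=
  [ffun i => [ffun j => inord (t i j)]].
symmetry; rewrite (reindex_onto wd nr).
  apply: eq_big => t.
    have -> : nr (wd t) == t.
      apply/eqP/ffunP => i; apply/ffunP => j; apply/val_inj.
      by rewrite !ffunE /= inordK.
    by rewrite andbT; apply: eq_forallb => j; rewrite /wd; under eq_bigr do rewrite !ffunE.
  move=> _; apply: eq_bigr => i _; congr h; apply: functional_extensionality => j.
  by rewrite /wd !ffunE.
move=> t /forallP Pt; apply/ffunP => i; apply/ffunP => j; apply/val_inj.
rewrite !ffunE /= inordK // ltnS (leq_trans _ (xM j)) // -(eqP (Pt j)).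
exact: (le_sum_term (fun i0 => (t i0 j : nat))).
Qed.

Definition fcons B k (y : {ffun 'I_N -> 'I_B.+1}) (t : {ffun 'I_k -> {ffun 'I_N -> 'I_B.+1}}) :
  {ffun 'I_k.+1 -> {ffun 'I_N -> 'I_B.+1}} :=
  [ffun i => if unlift ord0 i is Some i' then t i' else y].
Definition ftl B k (t : {ffun 'I_k.+1 -> {ffun 'I_N -> 'I_B.+1}}) :
  {ffun 'I_k -> {ffun 'I_N -> 'I_B.+1}} := [ffun i => t (lift ord0 i)].

Lemma fcons0 B k y t : @fcons B k y t ord0 = y.
Proof. by rewrite ffunE unlift_none. Qed.
Lemma fconsL B k y t i : @fcons B k y t (lift ord0 i) = t i.
Proof. by rewrite ffunE liftK. Qed.

Lemma gb_split B h k x :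
  gb B h k.+1 x = \sum_(y : {ffun 'I_N -> 'I_B.+1} | [forall j, (y j : nat) <= x j])
      h (fun j => (y j : nat)) * gb B h k (fun j => x j - y j).
Proof.
rewrite /gb (partition_big (fun t : {ffun 'I_k.+1 -> {ffun 'I_N -> 'I_B.+1}} => t ord0) (fun y : {ffun 'I_N -> 'I_B.+1} => [forall j, (y j : nat) <= x j])); last first.
  move=> t /forallP Pt; apply/forallP => j; rewrite -(eqP (Pt j)).
  exact: (le_sum_term (fun i0 => (t i0 j : nat))).
apply: eq_bigr => y /forallP yx; rewrite big_distrr /=.
rewrite (reindex_onto (@fcons B k y) (@ftl B k)); last first.
  move=> t /andP [_ /eqP t0]; apply/ffunP => i; rewrite ffunE.
  by case: (unliftP ord0 i) => [i'|] ->; rewrite ?ffunE.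
apply: eq_big => t.
  have -> : ftl (fcons y t) == t by apply/eqP/ffunP => i; rewrite ffunE fconsL.
  rewrite fcons0 eqxx !andbT; apply: eq_forallb => j.
  rewrite big_ord_recl fcons0 (eq_bigr (fun i => (t i j : nat))); last by move=> i _; rewrite fconsL.
  by rewrite -{1}(subnKC (yx j)) eqn_add2l.
move=> _; rewrite big_ord_recl fcons0; congr (_ * _).
by apply: eq_bigr => i _; rewrite fconsL.
Qed.

End GB.

Section Box.
Variables N L : nat.
Local Notation V := {ffun 'I_N -> 'I_L.+1}.
Definition vv (x : V) : vecN N := fun j => (x j : nat).
Definition lev (y x : V) : bool := [forall j, (y j : nat) <= x j].
Definition subv (x y : V) : V := [ffun j => inord (x j - y j)].
Definition addv (x y : V) : V := [ffun j => inord (x j + y j)].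
Definition delta (x : V) : nat := [forall j, (x j : nat) == 0].
Definition conv (a b : V -> nat) (x : V) : nat :=
  \sum_(y : V | lev y x) a y * b (subv x y).
Fixpoint pow (a : V -> nat) k x := if k is k'.+1 then conv a (pow a k') x else delta x.

Lemma vP (x y : V) : (forall j, (x j : nat) = y j) -> x = y.
Proof. by move=> h; apply/ffunP => j; apply/val_inj; exact: h. Qed.

Lemma inordE m : (inord m : 'I_L.+1) = (if m <= L then m else 0) :> nat.
Proof.
case: (leqP m L) => h; first by rewrite inordK.
by rewrite /inord /insubd insubN //= ltnS leqNgt h.
Qed.

Lemma valL (x : V) j : (x j : nat) <= L.
Proof. by rewrite -ltnS ltn_ord. Qed.

Lemma subv_val (x y : V) j : subv x y j = x j - y j :> nat.
Proof. by rewrite ffunE inordE (leq_trans (leq_subr _ _) (valL x j)). Qed.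

Lemma addv_val (x y : V) j : x j + y j <= L -> addv x y j = x j + y j :> nat.
Proof. by move=> h; rewrite ffunE inordE h. Qed.

Lemma levP (y x : V) : reflect (forall j, (y j : nat) <= x j) (lev y x).
Proof. exact: forallP. Qed.

Lemma conv_comm a b x : conv a b x = conv b a x.
Proof.
rewrite /conv (reindex_onto (subv x) (subv x)); last first.
  move=> y /levP yx; apply: vP => j; rewrite !subv_val; have := yx j; lia.
apply: eq_big => y.
  have -> : lev (subv x y) x by apply/levP => j; rewrite subv_val leq_subr.
  apply/eqP/levP => [e j | yx]; last by apply: vP => j; rewrite !subv_val; have := yx j; lia.
  have := congr1 (fun z : V => (z j : nat)) e; rewrite /= !subv_val; lia.
by move=> /andP [_ /eqP ->]; rewrite mulnC.
Qed.

Lemma conv_delta a x : conv a delta x = a x.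
Proof.
rewrite /conv (bigD1 x) /=; last by apply/levP.
have -> : delta (subv x x) = 1.
  by rewrite /delta; have -> // : [forall j, (subv x x j : nat) == 0]; apply/forallP => j; rewrite subv_val subnn.
rewrite muln1 big1 ?addn0 // => y /andP [/levP yx ne].
rewrite /delta; case e: [forall j, _]; last by rewrite muln0.
exfalso; move/negP: ne; apply; apply/eqP/vP => j.
move/forallP: e => /(_ j) /eqP; rewrite subv_val; have := yx j; lia.
Qed.

Lemma conv_ext a a' b b' x : (forall y, a y = a' y) -> (forall y, b y = b' y) ->
  conv a b x = conv a' b' x.
Proof. by move=> ha hb; apply: eq_bigr => y _; rewrite ha hb. Qed.

Lemma conv_assoc a b c x : conv (conv a b) c x = conv a (conv b c) x.
Proof.
rewrite /conv; under eq_bigr do rewrite big_distrl.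
rewrite (exchange_big_dep (fun y => lev y x)) /=; last first.
  move=> w y /levP wx /levP yw; apply/levP => j; exact: leq_trans (yw j) (wx j).
apply: eq_bigr => y /levP yx; rewrite big_distrr /=.
rewrite (reindex_onto (addv y) (fun w => subv w y)); last first.
  move=> w /andP [/levP wx /levP yw]; apply: vP => j.
  rewrite addv_val subv_val; have := yw j; have := valL w j; lia.
have hc : forall z, ((lev (addv y z) x && lev y (addv y z)) && (subv (addv y z) y == z)) = lev z (subv x y).
  move=> z; apply/idP/idP.
    move=> /andP [/andP [/levP h1 /levP h2] /eqP h3]; apply/levP => j.
    have := congr1 (fun z : V => (z j : nat)) h3; have := h1 j; have := h2 j.
    rewrite !subv_val /addv !ffunE inordE.
    case: ifP => hh; lia.
  move=> /levP zxy; have hz : forall j, y j + z j <= x j.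
    by move=> j; have := zxy j; rewrite subv_val; have := yx j; lia.
  have hL : forall j, y j + z j <= L by move=> j; exact: leq_trans (hz j) (valL x j).
  apply/andP; split; first (apply/andP; split).
  - by apply/levP => j; rewrite addv_val.
  - by apply/levP => j; rewrite addv_val // leq_addr.
  - apply/eqP/vP => j; rewrite subv_val addv_val //; lia.
apply: eq_big => [z|z]; first exact: hc.
rewrite hc => /levP zxy; have hz : forall j, y j + z j <= x j.
  by move=> j; have := zxy j; rewrite subv_val; have := yx j; move=> h1 h2; rewrite -(subnKC h1) leq_add2l.
have hL : forall j, y j + z j <= L by move=> j; exact: leq_trans (hz j) (valL x j).
rewrite mulnA; congr (_ * _ * _); congr (_ _); apply: vP => j;
  rewrite !subv_val ?addv_val //; lia.
Qed.

Lemma pow_add a i j x : pow a (i + j) x = conv (pow a i) (pow a j) x.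
Proof.
elim: i x => [|i IH] x /=.
  by rewrite conv_comm conv_delta.
rewrite (conv_ext (a' := a) (b' := fun y => conv (pow a i) (pow a j) y)) //.
by rewrite -conv_assoc.
Qed.

Lemma pow1 a x : pow a 1 x = a x.
Proof. exact: conv_delta. Qed.

Lemma conv_mod m a a' b x : (forall y, a y = a' y %[mod m]) ->
  conv a b x = conv a' b x %[mod m].
Proof.
move=> h; rewrite /conv -modn_summ -[in RHS]modn_summ; congr modn.
by apply: eq_bigr => y _; rewrite -modnMml h modnMml.
Qed.

Lemma conv_addl a a' b x : conv (fun y => a y + a' y) b x = conv a b x + conv a' b x.
Proof. by rewrite /conv -big_split; apply: eq_bigr => y _; rewrite mulnDl. Qed.

Lemma conv_addr a b b' x : conv a (fun y => b y + b' y) x = conv a b x + conv a b' x.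
Proof. by rewrite /conv -big_split; apply: eq_bigr => y _; rewrite mulnDr. Qed.

Lemma conv_scall n a b x : conv (fun y => n * a y) b x = n * conv a b x.
Proof. by rewrite /conv big_distrr; apply: eq_bigr => y _ /=; rewrite mulnA. Qed.

Lemma conv_dvd d1 d2 a b x : (forall y, d1 %| a y) -> (forall y, d2 %| b y) ->
  d1 * d2 %| conv a b x.
Proof. by move=> ha hb; apply: dvdn_sum => y _; apply: dvdn_mul. Qed.

Variable p : nat.
Definition pdivv (x : V) : bool := [forall j, p %| x j].

Lemma conv_supp a b x : (forall y, ~~ pdivv y -> a y = 0) ->
  (forall y, ~~ pdivv y -> b y = 0) -> ~~ pdivv x -> conv a b x = 0.
Proof.
move=> ha hb nx; apply: big1 => y /levP yx.
case: (boolP (pdivv y)) => py; last by rewrite ha.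
case: (boolP (pdivv (subv x y))) => pxy; last by rewrite hb ?muln0.
exfalso; move/negP: nx; apply; apply/forallP => j.
move/forallP: py => /(_ j) py; move/forallP: pxy => /(_ j); rewrite subv_val => pxy.
by rewrite -(subnKC (yx j)) dvdn_add.
Qed.

Lemma pow_supp a k x : (forall y, ~~ pdivv y -> a y = 0) -> ~~ pdivv x -> pow a k x = 0.
Proof.
move=> ha; elim: k x => [|k IH] x nx /=.
  rewrite /delta; case e: [forall j, _]=> //; exfalso; move/negP: nx; apply.
  by apply/forallP => j; move/forallP: e => /(_ j) /eqP ->.
by apply: conv_supp.
Qed.

End Box.

Lemma iter_const (T : Type) (s : T -> T) d t : iter d s t = t -> forall a, iter (a * d) s t = t.
Proof. move=> h; elim=> [|a IH] //=; by rewrite mulSn iterD IH h. Qed.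

Lemma cyc_dvd (T : finType) (s : T -> T) (p : nat) (w : T -> nat) :
  prime p -> (forall t, iter p s t = t) -> (forall t, w (s t) = w t) ->
  forall P : pred T, (forall t, P (s t) = P t) -> (forall t, P t -> s t != t) ->
  p %| \sum_(t | P t) w t.
Proof.
move=> pp hp hw.
have p0 : 0 < p by apply: prime_gt0.
have iterw : forall k t, w (iter k s t) = w t.
  by elim=> [|k IH] t //=; rewrite hw IH.
have itermod : forall k t, iter k s t = iter (k %% p) s t.
  by move=> k t; rewrite {1}(divn_eq k p) iterD iter_const.
have nofix : forall t d, s t != t -> 0 < d < p -> iter d s t != t.
  move=> t d st /andP [d0 dp]; apply/negP => /eqP hd.
  have cop : coprime p d by rewrite prime_coprime // gtnNdvd.
  case: (Bezoutl d p0) => a _; rewrite (eqP cop) => hdv.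
  move: st; rewrite -{1}[s t]/(iter 1 s t) -{1}(iter_const hd a) -iterD.
  by rewrite itermod add1n (eqP hdv) /= eqxx.
move=> P; move: {2}#|P|.+1 (ltnSn #|P|) => n.
elim: n P => [|n IH] P //= cardP hP hfix.
case: (pickP P) => [t0 Pt0 | P0]; last by rewrite big_pred0.
pose O := [set iter (nat_of_ord i) s t0 | i in [set: 'I_p]].
have Pit : forall k, P (iter k s t0).
  by elim=> [|k IHk] //=; rewrite hP.
have Oinv : forall t, (s t \in O) = (t \in O).
  move=> t; apply/imsetP/imsetP => [[i _ hi] | [i _ hi]].
    exists (Ordinal (ltn_pmod (p.-1 + i) p0)); first by rewrite inE.
    by rewrite /= -itermod iterD -hi -iterSr prednK // hp.
  exists (Ordinal (ltn_pmod i.+1 p0)); first by rewrite inE.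
  by rewrite /= -itermod iterS hi.
rewrite (bigID (mem O)) /=; apply: dvdn_add.
  rewrite (eq_bigl (mem O)); last first.
    move=> t /=; case: (boolP (t \in O)) => [tO|]; rewrite ?andbT ?andbF //.
    by move: tO => /imsetP [i _ ->]; apply: Pit.
  rewrite big_imset /=; last first.
    move=> i j _ _ /= hij; apply/val_inj => /=.
    wlog lt_ij : i j hij / i < j.
      move=> H; case: (ltngtP i j) => // c; [exact: H | symmetry; exact: H].
    have := nofix t0 (p - j + i) (hfix _ Pt0).
    rewrite iterD hij -iterD subnK ?hp ?eqxx; last exact: ltnW.
    have -> : 0 < p - j + i by rewrite addn_gt0 subn_gt0 ltn_ord.
    have hlt : p - j + i < p by have := ltn_ord j; lia.
    by rewrite hlt => /(_ isT).
  rewrite (eq_bigr (fun _ => w t0)); last by move=> i _; rewrite iterw.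
  by rewrite sum_nat_const cardsT card_ord dvdn_mulr.
apply: IH.
- rewrite -ltnS (leq_trans _ cardP) // ltnS.
  have -> : #|(fun t => P t && (t \notin O))| = #|[predD P & mem O]|.
    by apply: eq_card => t; rewrite !inE andbC.
  rewrite -(cardID (mem O) P) addnC -{1}[#|[predD _ & _]|]addn0 ltn_add2l.
  apply/card_gt0P; exists t0; rewrite !inE; apply/andP; split => //.
  by apply/imsetP; exists (Ordinal p0); rewrite ?inE.
- by move=> t /=; rewrite hP Oinv.
- by move=> t /andP [Pt _]; exact: hfix.
Qed.

Lemma gb_pow N L (h : vecN N -> nat) k (x : {ffun 'I_N -> 'I_L.+1}) :
  gb L h k (vv x) = pow (fun y => h (vv y)) k x.
Proof.
elim: k x => [|k IH] x.
  rewrite /gb /= (eq_bigr (fun _ => 1)); last by move=> t _; rewrite big_ord0.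
  rewrite (eq_bigl (fun _ => [forall j, (x j : nat) == 0])); last first.
    by move=> t; apply: eq_forallb => j; rewrite big_ord0 eq_sym.
  rewrite /delta; case: [forall j, _]; last by rewrite big_pred0.
  by rewrite sum1_card card_ffun card_ord expn0.
rewrite gb_split /=; apply: eq_bigr => y /forallP yx; congr (_ * _).
rewrite -IH; congr gb; apply: functional_extensionality => j.
by rewrite /vv subv_val.
Qed.

Lemma gbinom_pow N L (h : vecN N -> nat) k (x : {ffun 'I_N -> 'I_L.+1}) :
  gbinom h k (vv x) = pow (fun y => h (vv y)) k x.
Proof.
rewrite gbinom_gb (@gb_bound N _ L) ?gb_pow //.
  by apply/bigmax_leqP => j _; exact: valL.
by move=> j; apply: (leq_bigmax_cond (P := xpredT)).
Qed.

Lemma iter_ordS p k (i : 'I_p) : (iter k (@ordS p) i : nat) = (i + k) %% p.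
Proof.
elim: k => [|k IH].
  by rewrite addn0 (modn_small (ltn_ord i)).
rewrite iterS. 
have -> : (ordS (iter k (@ordS p) i) : nat) = (iter k (@ordS p) i).+1 %% p by [].
by rewrite IH addnS -[((i + k) %% p).+1]addn1 modnDml addn1.
Qed.
Lemma gb_dvd N B (f : vecN N -> nat) p (x : vecN N) : prime p ->
  (exists j, ~~ (p %| x j)) -> p %| gb B f p x.
Proof.
move=> pp [j0 nj0].
have p0 : 0 < p by apply: prime_gt0.
pose s (t : {ffun 'I_p -> {ffun 'I_N -> 'I_B.+1}}) : {ffun 'I_p -> {ffun 'I_N -> 'I_B.+1}} :=
  [ffun i => t (ordS i)].
have iters : forall k t, iter k s t = [ffun i => t (iter k (@ordS p) i)].
  elim=> [|k IH] t; first by apply/ffunP => i; rewrite ffunE.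
  by apply/ffunP => i; rewrite iterS IH !ffunE iterSr.
apply: (@cyc_dvd _ s p) => //.
- move=> t; rewrite iters; apply/ffunP => i; rewrite ffunE; suff -> : iter p (@ordS p) i = i by [].
  by apply: ord_inj; rewrite iter_ordS -modnDmr modnn addn0 (modn_small (ltn_ord i)).
- move=> t; rewrite [RHS](reindex_inj (@ordS_inj p)) /=.
  by apply: eq_bigr => i _; rewrite ffunE.
- move=> t; apply: eq_forallb => j; rewrite [in RHS](reindex_inj (@ordS_inj p)) /=.
  by rewrite (eq_bigr (fun i => (t (ordS i) j : nat))) // => i _; rewrite ffunE.
- move=> t /forallP Pt; apply/negP => /eqP st.
  pose i0 := Ordinal p0.
  have ti : forall i, t i = t i0.
    move=> i; have -> : i = iter i (@ordS p) i0.
      by apply: ord_inj; rewrite iter_ordS /= add0n (modn_small (ltn_ord i)).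
    elim: (nat_of_ord i) => [|k IH] //=.
    by rewrite -IH -{2}st ffunE.
  move/negP: nj0; apply; rewrite -(eqP (Pt j0)).
  rewrite (eq_bigr (fun _ => (t i0 j0 : nat))); last by move=> i _; rewrite ti.
  by rewrite sum_nat_const card_ord dvdn_mulr.
Qed.

Section Main.
Variables (N L p : nat) (f : vecN N -> nat).
Hypothesis pp : prime p.
Local Notation V := {ffun 'I_N -> 'I_L.+1}.

Definition F (y : V) := f (vv y).
Definition P (y : V) := pow F p y.
Definition G (y : V) := if pdivv p y then P y else 0.
Definition H (y : V) := if pdivv p y then 0 else P y.

Lemma p_gt0 : 0 < p. Proof. exact: prime_gt0. Qed.

Lemma PGH y : P y = G y + H y.
Proof. by rewrite /G /H; case: ifP; rewrite ?addn0. Qed.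

Lemma Gsupp y : ~~ pdivv p y -> G y = 0.
Proof. by rewrite /G => /negbTE ->. Qed.

Lemma Hdvd y : p %| H y.
Proof.
rewrite /H; case: ifP => // /negbT /forallPn ex.
rewrite /P /F -gbinom_pow gbinom_gb; apply: gb_dvd => //.
Qed.

Lemma convH_dvd a x : p %| conv a H x.
Proof. by rewrite -[p]mul1n; apply: conv_dvd => // y; exact: Hdvd. Qed.

Lemma main_cong n x :
  pow F (n.+1 * p) x = pow G n.+1 x + n.+1 * conv (pow G n) H x %[mod p ^ 2].
Proof.
elim: n x => [|n IH] x.
  rewrite mul1n /= conv_delta.
  by rewrite -/(P x) PGH mul1n conv_comm conv_delta.
rewrite mulSn addnC pow_add (conv_mod _ _ IH).
rewrite (@conv_ext _ _ _ (fun y => pow G n.+1 y + n.+1 * conv (pow G n) H y) _ (fun y => G y + H y)) //; last exact: PGH.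
rewrite conv_addl !conv_addr conv_scall conv_scall.
have e1 : conv (pow G n.+1) G x = pow G n.+2 x by rewrite conv_comm.
have e2 : conv (fun y => conv (pow G n) H y) G x = conv (pow G n.+1) H x.
  rewrite conv_comm -conv_assoc; apply: conv_ext => // y.
have [q hq] : exists q, conv (fun y => conv (pow G n) H y) H x = q * p ^ 2.
  apply/dvdnP; rewrite expnSr expn1; apply: conv_dvd => y; [exact: convH_dvd | exact: Hdvd].
rewrite e1 e2 hq.
have -> : pow G n.+2 x + conv (pow G n.+1) H x + (n.+1 * conv (pow G n.+1) H x + n.+1 * (q * p ^ 2))
   = (n.+1 * q) * p ^ 2 + (pow G n.+2 x + n.+2 * conv (pow G n.+1) H x).
  set A := pow G n.+2 x; set B := conv (pow G n.+1) H x; set C := p ^ 2.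
  rewrite (mulSn n.+1) !mulnA; lia.
by rewrite modnMDl.
Qed.

Definition g (x : vecN N) := gbinom f p (fun j => p * x j).
Definition scale (z : V) : V := [ffun j => inord (p * z j)].
Definition divv (y : V) : V := [ffun j => inord (y j %/ p)].

Lemma scale_val (z : V) j : p * z j <= L -> scale z j = p * z j :> nat.
Proof. by move=> h; rewrite ffunE inordE h. Qed.

Lemma pow_scale m (z : V) : (forall j, p * z j <= L) -> pow G m (scale z) = pow (fun w => g (vv w)) m z.
Proof.
have p0 := p_gt0.
elim: m z => [|m IH] z hz /=.
  rewrite /delta; congr nat_of_bool; apply: eq_forallb => j.
  by rewrite scale_val // muln_eq0 eqn0Ngt p0.
rewrite /conv (bigID (pdivv p)) /= [X in _ + X]big1 ?addn0; last first.
  by move=> y /andP [_ ny]; rewrite Gsupp.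
have hc : forall w, (lev (scale w) (scale z) && pdivv p (scale w)) && (divv (scale w) == w) = lev w z.
  move=> w; apply/idP/idP.
    move=> /andP [/andP [/levP h1 _] /eqP h2]; apply/levP => j.
    have := congr1 (fun z : V => (z j : nat)) h2; have := h1 j.
    rewrite /divv /scale !ffunE !inordE (hz j).
    case: ifP => hh.
      by move=> h _; rewrite -(leq_pmul2l p0).
    by rewrite div0n leq0n => _ e; move: hh; rewrite -e muln0.
  move=> /levP hw; have hL : forall j, p * w j <= L.
    by move=> j; apply: leq_trans (hz j); rewrite leq_pmul2l.
  apply/andP; split; first (apply/andP; split).
  - by apply/levP => j; rewrite !scale_val // leq_pmul2l.
  - by apply/forallP => j; rewrite scale_val // dvdn_mulr.
  - apply/eqP/vP => j; rewrite /divv ffunE scale_val // mulKn // inordE.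
    by rewrite (leq_trans _ (valL w j)) ?leq_div.
rewrite (reindex_onto scale divv); last first.
  move=> y /andP [/levP yz /forallP py]; apply: vP => j.
  have hy : y j %/ p <= L by rewrite (leq_trans _ (valL y j)) ?leq_div.
  rewrite /scale /divv !ffunE (@inordK L (y j %/ p)) ?ltnS // mulnC divnK ?py // inordK //.
apply: eq_big => [w|w]; first exact: hc.
rewrite hc => /levP hw; have hL : forall j, p * w j <= L.
  by move=> j; apply: leq_trans (hz j); rewrite leq_pmul2l.
congr (_ * _).
  rewrite /G; have -> : pdivv p (scale w) by apply/forallP => j; rewrite scale_val // dvdn_mulr.
  rewrite /P /F -gbinom_pow /g; congr gbinom; apply: functional_extensionality => j.
  by rewrite /vv scale_val.
have -> : subv (scale z) (scale w) = scale (subv z w).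
  apply: vP => j; rewrite subv_val !scale_val ?subv_val ?mulnBr //.
  exact: leq_trans (leq_subr _ _) (hz j).
apply: IH => j; rewrite subv_val mulnBr; exact: leq_trans (leq_subr _ _) (hz j).
Qed.
End Main.
End Aux.
Import Aux.

Theorem theorem10 (N : nat) (hN : 1 <= N) (f : vecN N -> nat) (p : nat)
  (hp : prime p) (n : nat) (l : vecN N)
  (hl : forall m : vecN N, ~ (forall j : 'I_N, l j = p * m j)) :
  let g : vecN N -> nat := fun x => gbinom f p (fun j => p * x j) in
  let L := \max_(j < N) l j in
  gbinom f (n * p) l =
  n * \sum_(k : {ffun 'I_N -> 'I_L.+1}
             | [&& [forall j : 'I_N, (k j : nat) <= l j],
                   [exists j : 'I_N, (k j : nat) != 0],
                   ~~ [forall j : 'I_N, p %| k j] &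
                   [forall j : 'I_N, p %| l j - k j]])
        gbinom f p (fun j => (k j : nat))
        * gbinom g (n - 1) (fun j => (l j - k j) %/ p)
  %[mod p ^ 2].
Proof.
move=> g0 L.
have p0 : 0 < p by apply: prime_gt0.
have lL : forall j, l j <= L.
  by move=> j; rewrite /L; apply: (leq_bigmax_cond (P := xpredT)).
pose lV : {ffun 'I_N -> 'I_L.+1} := [ffun j => inord (l j)].
have lVv : forall j, (lV j : nat) = l j by move=> j; rewrite ffunE inordK // ltnS.
have el : vv lV = l by apply: functional_extensionality => j; rewrite /vv lVv.
have nl : ~~ pdivv p lV.
  apply/negP => /forallP h; apply: (hl (fun j => l j %/ p)) => j.
  by rewrite mulnC divnK // -lVv; exact: h.
case: n => [|m].
  rewrite !mul0n /gbinom big1 // => t /forallP ht; exfalso.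
  apply: (hl (fun _ => 0)) => j; move: (ht j); rewrite big_ord0 muln0 => /eqP <-.
  by [].
rewrite -[in LHS]el gbinom_pow (main_cong f hp).
rewrite (pow_supp _ _ nl); last exact: Gsupp.
rewrite add0n; congr (_ %% _); congr (_ * _).
rewrite conv_comm /conv big_mkcond [RHS]big_mkcond; apply: eq_bigr => k _.
rewrite subn1 /=.
have hlev : lev k lV = [forall j, (k j : nat) <= l j] by apply: eq_forallb => j; rewrite lVv.
rewrite hlev; case: (boolP [forall j, (k j : nat) <= l j]) => kl //=.
rewrite /H /pdivv; case: (boolP [forall j, p %| k j]) => pk /=; first by rewrite mul0n andbF.
have nz : [exists j, (k j : nat) != 0].
  have [j hj] : exists j, ~~ (p %| k j) by apply/forallPn.
  apply/existsP; exists j.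
  by apply/negP => /eqP e; move: hj; rewrite e dvdn0.
rewrite nz /=.
case: (boolP [forall j, p %| l j - k j]) => plk /=; last first.
  rewrite (@pow_supp _ _ p _ _ (subv lV k)) ?muln0 //; first exact: Gsupp.
  apply/negP => /forallP h; move/negP: plk; apply; apply/forallP => j.
  by have := h j; rewrite subv_val lVv.
congr (_ * _); first by rewrite /P /F -gbinom_pow.
pose z : {ffun 'I_N -> 'I_L.+1} := [ffun j => inord ((l j - k j) %/ p)].
have zv : forall j, (z j : nat) = (l j - k j) %/ p.
  move=> j; rewrite ffunE inordK // ltnS.
  exact: leq_trans (leq_div _ _) (leq_trans (leq_subr _ _) (lL j)).
have hz : forall j, p * z j <= L.
  move/forallP: plk => plk j; rewrite zv mulnC divnK //.
  exact: leq_trans (leq_subr _ _) (lL j).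
have e : subv lV k = scale p z.
  apply: vP => j; rewrite subv_val scale_val // lVv zv mulnC divnK //.
  by move/forallP: plk.
have ez : vv z = (fun j => (l j - k j) %/ p).
  by apply: functional_extensionality => j; rewrite /vv zv.
by rewrite e (pow_scale f hp) // -gbinom_pow ez.
Qed.
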